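(* Let $\mathcal{G}^{c}=(\mathbb{C},\mathbb{E}^{c})$ be a C-DMG over DMGs and let $\mathbb{C}_X,\mathbb{C}_Y,\mathbb{C}_W$ be pairwise disjoint subsets of $\mathbb{C}$. If $\mathbb{C}_X$ and $\mathbb{C}_Y$ are $\sigma$-separated by $\mathbb{C}_W$ in $\mathcal{G}^{c}$, then in every DMG $\mathcal{G}=(\mathbb{V},\mathbb{E})$ compatible with $\mathcal{G}^{c}$, the sets $X=\bigcup_{C\in\mathbb{C}_X}C$ and $Y=\bigcup_{C\in\mathbb{C}_Y}C$ are $\sigma$-separated by $W=\bigcup_{C\in\mathbb{C}_W}C$.
   Context: A directed mixed graph (DMG) $\mathcal{G}=(\mathbb{V},\mathbb{E})$ has directed edges $\to$ and bidirected edges $\leftrightarrow$, cycles allowed; the DMGs considered are those induced by input/output structural causal models (ioSCMs, Forré–Mooij 2020): vertices are the endogenous and input variables, $U\to V$ if $U$ is an argument of the causal mechanism of $V$, and $U\leftrightarrow V$ if some latent variable is a parent of both. A C-DMG over DMGs $\mathcal{G}^c=(\mathbb{C},\mathbb{E}^c)$ is obtained from such a DMG $\mathcal{G}=(\mathbb{V},\mathbb{E})$ as follows: $\mathbb{C}$ is a partition of $\mathbb{V}$ into nonempty clusters, and for all $C_i,C_j\in\mathbb{C}$ (possibly equal) the edge $C_i\to C_j$ (resp. $C_i\leftrightarrow C_j$) is in $\mathbb{E}^c$ iff there exist $V_i\in C_i,V_j\in C_j$ with $V_i\to V_j$ (resp. $V_i\leftrightarrow V_j$) in $\mathbb{E}$;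 such $\mathcal{G}$ is called compatible with $\mathcal{G}^c$. In any such graph, ancestors and descendants include the vertex itself, and the strongly connected component of $V$ is $\mathrm{Sc}(V)=\mathrm{Anc}(V)\cap\mathrm{Desc}(V)$. Write $A\mathbin{*\!\!\to} B$ for an edge $A\to B$ or $A\leftrightarrow B$, and $A\mathbin{\leftarrow\!\!*} B$ for $A\leftarrow B$ or $A\leftrightarrow B$. A walk $\langle V_1,\dots,V_n\rangle$ (a sequence of vertices with consecutive vertices joined by a specified edge) is $\sigma$-blocked by a set $W$ if: (1) $V_1\in W$ or $V_n\in W$; or (2) for some $1<i<n$, $V_{i-1}\mathbin{*\!\!\to}V_i\mathbin{\leftarrow\!\!*}V_{i+1}$ on the walk and $V_i\notin W$; or (3) for some $1<i<n$, $V_{i-1}\leftarrow V_i\mathbin{\leftarrow\!\!*}V_{i+1}$ on the walk and $V_i\in W\setminus \mathrm{Sc}(V_{i-1})$; or (4) for some $1<i<n$, $V_{i-1}\mathbin{*\!\!\to}V_i\to V_{i+1}$ on the walk and $V_i\in W\setminus\mathrm{Sc}(V_{i+1})$; or (5) for some $1<i<n$, $V_{i-1}\leftarrow V_i\to V_{i+1}$ on the walk and $V_i\in W\setminus(\mathrm{Sc}(V_{i-1})\cap\mathrm{Sc}(V_{i+1}))$. For disjoint vertex sets $X,Y,W$, $W$ $\sigma$-separates $X$ and $Y$ if every walk from a vertex of $X$ to a vertex of $Y$ is $\sigma$-blocked by $W$. These notions apply to both DMGs and C-DMGs. *)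

(* Defs.v *)
From mathcomp Require Import all_boot.
Set Implicit Arguments. Unset Strict Implicit. Unset Printing Implicit Defensive.

(* The kind of edge joining consecutive vertices a, b of a walk:
   Fwd : a -> b,  Bwd : a <- b,  Bi : a <-> b. *)
Inductive ekind := Fwd | Bwd | Bi.

Section Graph.
Variables (V : finType) (dir bi : rel V).

(* strongly connected component: Anc(v) ∩ Desc(v) (reflexive) *)
Definition Sc (v : V) : {set V} :=
  [set u | connect dir u v && connect dir v u].

Definition edge_ok (a : V) (e : ekind) (b : V) : bool :=
  match e with Fwd => dir a b | Bwd => dir b a | Bi => bi a b end.

(* a walk is a start vertex x and a list of (edge kind, next vertex) *)
Fixpoint is_walk (a : V) (s : seq (ekind * V)) : bool :=
  if s is (e, b) :: s' then edge_ok a e b && is_walk b s' else true.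

Definition walk_end (x : V) (s : seq (ekind * V)) : V := last x (map snd s).

(* arrowhead at b on edge (a e1 b) / on edge (b e2 c) *)
Definition head_in (e1 : ekind) := if e1 is Bwd then false else true.
Definition head_out (e2 : ekind) := if e2 is Fwd then false else true.

(* conditions (2)-(5) at the inner vertex b of a ... a e1 b e2 c ... *)
Definition triple_blocked (W : {set V}) (a : V) (e1 : ekind) (b : V)
    (e2 : ekind) (c : V) : bool :=
  [|| (head_in e1 && head_out e2 && (b \notin W)),
      (~~ head_in e1 && head_out e2 && (b \in W :\: Sc a)),
      (head_in e1 && ~~ head_out e2 && (b \in W :\: Sc c)) |
      (~~ head_in e1 && ~~ head_out e2 && (b \in W :\: (Sc a :&: Sc c)))].

Fixpoint inner_blocked (W : {set V}) (a : V) (s : seq (ekind * V)) : bool :=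
  match s with
  | (e1, b) :: (((e2, c) :: _) as s') =>
      triple_blocked W a e1 b e2 c || inner_blocked W b s'
  | _ => false
  end.

Definition sigma_blocked (W : {set V}) (x : V) (s : seq (ekind * V)) : bool :=
  [|| x \in W, walk_end x s \in W | inner_blocked W x s].

Definition sigma_separated (X Y W : {set V}) : Prop :=
  forall (x : V) (s : seq (ekind * V)),
    x \in X -> walk_end x s \in Y -> is_walk x s -> sigma_blocked W x s.

End Graph.

(* A DMG (dir, bi) on V together with a cluster map cl : V -> C is compatible
   with the C-DMG (dirC, biC) on C: the clusters cl^-1(Ci) form a partition of
   V into nonempty sets (cl surjective), and cluster edges are exactly the
   induced ones (cluster self-loops included). *)
Definition compatible (V C : finType) (dir bi : rel V) (cl : V -> C)
    (dirC biC : rel C) : Prop :=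
  (forall Ci : C, exists v : V, cl v = Ci) /\
  (forall Ci Cj : C,
      dirC Ci Cj = [exists u, exists v, [&& cl u == Ci, cl v == Cj & dir u v]]) /\
  (forall Ci Cj : C,
      biC Ci Cj = [exists u, exists v, [&& cl u == Ci, cl v == Cj & bi u v]]).

Definition cl_union (V C : finType) (cl : V -> C) (CS : {set C}) : {set V} :=
  [set v | cl v \in CS].

(* Main.v *)
Require Import Defs.
From mathcomp Require Import all_boot.
Set Implicit Arguments. Unset Strict Implicit.

Section Aux.
Variables (C V : finType) (dirC biC : rel C) (dir bi : rel V) (cl : V -> C).
Hypothesis hdir : forall u v, dir u v -> dirC (cl u) (cl v).
Hypothesis hbi : forall u v, bi u v -> biC (cl u) (cl v).

Lemma conn_map u v : connect dir u v -> connect dirC (cl u) (cl v).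
Proof.
move=> /connectP[p e_p ->]; elim: p u e_p => //= y p IHp x /andP[exy /IHp].
by apply: connect_trans; apply: connect1; apply: hdir.
Qed.

Lemma Sc_map a b : b \in Sc dir a -> cl b \in Sc dirC (cl a).
Proof. by rewrite !inE => /andP[h1 h2]; rewrite !conn_map. Qed.

Definition mapw (s : seq (ekind * V)) := map (fun p => (p.1, cl p.2)) s.

Lemma walk_map x s : is_walk dir bi x s -> is_walk dirC biC (cl x) (mapw s).
Proof.
elim: s x => //= [[e b] s IH] x /andP[he hw]; rewrite IH // andbT.
by case: e he => /=; [apply: hdir|apply: hdir|apply: hbi].
Qed.

Lemma end_map x s : walk_end (cl x) (mapw s) = cl (walk_end x s).
Proof.
rewrite /walk_end /mapw -map_comp.
by elim: s x => //= [[e b] s IH] x /=; rewrite IH.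
Qed.

Lemma triple_map (CW : {set C}) a e1 b e2 c :
  triple_blocked dirC CW (cl a) e1 (cl b) e2 (cl c) ->
  triple_blocked dir [set v | cl v \in CW] a e1 b e2 c.
Proof.
have Ha := contra (@Sc_map a b). have Hc := contra (@Sc_map c b).
have HW : (b \in [set v | cl v \in CW]) = (cl b \in CW) by rewrite inE.
rewrite /triple_blocked !in_setD !in_setI HW.
case: e1; case: e2 => /=; rewrite ?andbF ?andbT ?orbF //=.
all: move=> /andP[h ->]; rewrite andbT; first [by apply: Ha | by apply: Hc | idtac].
all: move: h; rewrite !negb_and => /orP[/Ha|/Hc] ->; rewrite ?orbT //.

Qed.

Lemma inner_map (CW : {set C}) a s :
  inner_blocked dirC CW (cl a) (mapw s) ->
  inner_blocked dir [set v | cl v \in CW] a s.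
Proof.
elim: s a => // [[e1 b] s IH] a.
case: s IH => // [[e2 c] s] IH /= /orP[h|h]; last by apply/orP; right; apply: IH.
by rewrite triple_map.
Qed.
End Aux.

Theorem theorem1 (C : finType) (dirC biC : rel C) (CX CY CW : {set C}) :
  [disjoint CX & CY] -> [disjoint CX & CW] -> [disjoint CY & CW] ->
  sigma_separated dirC biC CX CY CW ->
  forall (V : finType) (dir bi : rel V) (cl : V -> C),
    symmetric bi ->
    compatible dir bi cl dirC biC ->
    sigma_separated dir bi (cl_union cl CX) (cl_union cl CY) (cl_union cl CW).
Proof.
move=> _ _ _ Hsep V dir bi cl _ [_ [Hd Hb]] x s.
have hdir : forall u v, dir u v -> dirC (cl u) (cl v).
  by move=> u v h; rewrite Hd; apply/existsP; exists u; apply/existsP; exists v; rewrite !eqxx.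
have hbi : forall u v, bi u v -> biC (cl u) (cl v).
  by move=> u v h; rewrite Hb; apply/existsP; exists u; apply/existsP; exists v; rewrite !eqxx.
rewrite /cl_union !inE => hx hy hw.
have := Hsep (cl x) (mapw cl s) hx.
rewrite end_map => /(_ hy (walk_map hdir hbi hw)).
rewrite /sigma_blocked end_map !inE => /orP[->//|/orP[->|h]]; rewrite ?orbT //.
by rewrite (inner_map hdir h) !orbT.
Qed.
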